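(* For a finite additive poset $A$ the following are equivalent: (i) $A$ is plain; (ii) the set of all order-preserving linear functionals on $A$ is separating; (iii) there exists a separating subset of $A^*$; (iv) there is a set $S\subset A^*$ with $\bigcap_{s\in S}\operatorname{Ker}s=0$ such that for all $a,b\in A$, $a\le b$ holds if and only if $s(a)\le_t s(b)$ for all $s\in S$.
   Context: An additive poset is a pair $(A,\le)$ where $A$ is an abelian group and $\le$ is a partial order on $A$ such that for all $a,b,c\in A$: $(\ast)$ if $b\le a$ and $c\le a$ then $b+c\le a$; $(\ast\ast)$ if $a\le b$ and $a\le c$ then $a\le a+b+c$. $A$ is a $\mathbb{Z}/2\mathbb{Z}$-vector space and $A^*=\operatorname{Hom}(A,\mathbb{Z}/2\mathbb{Z})$. The trivial order $\le_t$ on $\mathbb{Z}/2\mathbb{Z}$ is $0\le_t0$, $0\le_t1$, $1\le_t1$. A functional $f\in A^*$ is order-preserving if $a\le b$ implies $f(a)\le_t f(b)$. A set $S\subset A^*$ is separating if all its elements are order-preserving and for any $a,b\in A$ with $a\not\le b$ there is $s\in S$ with $s(a)=1$, $s(b)=0$. For a set $I$, $2^I$ denotes the subsets of $I$ with symmetric difference and inclusion. An embedding of additive posets $A\to B$ is an injective group homomorphism $\varphi$ with $a\le b\iff\varphi(a)\le\varphi(b)$. $A$ is plain if it embeds in $2^I$ for some finite set $I$. *)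

(* Defs.v *)
From HB Require Import structures.
From mathcomp Require Import all_boot all_order all_algebra.
Set Implicit Arguments. Unset Strict Implicit. Unset Printing Implicit Defensive.
Import GRing.Theory.
Local Open Scope ring_scope.

Definition additive_poset (A : zmodType) (le : A -> A -> Prop) : Prop :=
  [/\ (forall a, le a a),
      (forall a b, le a b -> le b a -> a = b),
      (forall a b c, le a b -> le b c -> le a c),
      (forall a b c, le b a -> le c a -> le (b + c) a) &
      (forall a b c, le a b -> le a c -> le a (a + b + c))].

Definition le_t (x y : 'Z_2) : Prop := (x <= y)%N.

(* elements of A^* = Hom(A, Z/2Z) *)
Definition is_functional (A : zmodType) (f : A -> 'Z_2) : Prop :=
  forall a b, f (a + b) = f a + f b.

Definition order_preserving (A : zmodType) (le : A -> A -> Prop)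
  (f : A -> 'Z_2) : Prop :=
  forall a b, le a b -> le_t (f a) (f b).

Definition subset_dual (A : zmodType) (S : (A -> 'Z_2) -> Prop) : Prop :=
  forall s, S s -> is_functional s.

Definition separating (A : zmodType) (le : A -> A -> Prop)
  (S : (A -> 'Z_2) -> Prop) : Prop :=
  (forall s, S s -> order_preserving le s) /\
  (forall a b, ~ le a b -> exists2 s, S s & s a = 1 /\ s b = 0).

(* 2^I : subsets of I with symmetric difference and inclusion *)
Definition symdiff (I : finType) (X Y : {set I}) : {set I} :=
  (X :\: Y) :|: (Y :\: X).

Definition embeds_in_powerset (A : zmodType) (le : A -> A -> Prop)
  (I : finType) : Prop :=
  exists phi : A -> {set I},
    [/\ injective phi,
        (forall a b, phi (a + b) = symdiff (phi a) (phi b)) &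
        (forall a b, le a b <-> phi a \subset phi b)].

Definition plain (A : zmodType) (le : A -> A -> Prop) : Prop :=
  exists I : finType, embeds_in_powerset le I.

(* Main.v *)
Require Import Defs.
From mathcomp Require Import all_boot all_order all_algebra.
From Stdlib Require Import Classical ClassicalEpsilon.
Import GRing.Theory.
Local Open Scope ring_scope.

Lemma z2 (x : 'Z_2) : x = 0 \/ x = 1.
Proof. case: x => [[|[|n]] H]; [left|right|]; try apply/val_inj => //. by []. Qed.
Lemma z2_11 : (1 + 1 : 'Z_2) = 0. Proof. by apply/eqP. Qed.
Lemma z2_le10 : ~ le_t 1 0. Proof. by []. Qed.
Lemma z2_10 : (1 : 'Z_2) <> 0. Proof. by move/eqP. Qed.

Lemma fun0 (A : zmodType) (s : A -> 'Z_2) : is_functional s -> s 0 = 0.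
Proof.
move=> H; have := H 0 0; rewrite addr0 => E.
by case: (z2 (s 0)) => E2 //; rewrite E2 z2_11 in E; rewrite E2.
Qed.

Section S.
Variables (A : finZmodType) (le : A -> A -> Prop).
Hypothesis hA : additive_poset le.

Definition good (f : A -> 'Z_2) := is_functional f /\ order_preserving le f.
Definition gb (f : {ffun A -> 'Z_2}) : bool :=
  if excluded_middle_informative (good f) then true else false.
Definition phi (a : A) : {set {ffun A -> 'Z_2}} :=
  [set f | gb f && (f a == 1)].

Lemma gbP {f} : gb f -> good f.
Proof. by rewrite /gb; case: excluded_middle_informative. Qed.

Lemma p2p1 : separating le good -> plain le.
Proof.
case=> Hop Hsep.
have ord : forall a b, le a b <-> phi a \subset phi b.
  move=> a b; split.
    move=> lab; apply/subsetP => f; rewrite !inE => /andP [g /eqP fa].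
    rewrite g /=; case: (gbP g) => _ op; have := op a b lab; rewrite fa.
    by case: (z2 (f b)) => ->.
  move=> sub; apply: NNPP => nab; case: (Hsep a b nab) => s gs [sa sb].
  have gf : good [ffun x => s x].
    case: gs => fs os; split.
      by move=> x y; rewrite !ffunE; apply: fs.
    by move=> x y l; rewrite !ffunE; apply: os.
  have gbf : gb [ffun x => s x].
    by rewrite /gb; case: excluded_middle_informative.
  have : [ffun x => s x] \in phi a by rewrite inE gbf ffunE sa.
  move/(subsetP sub); rewrite inE ffunE sb ; by case/andP.
exists {ffun A -> 'Z_2}; exists phi; split.
- move=> a b E; case: hA => _ anti _ _ _; apply: anti; apply/ord; by rewrite E.
- move=> a b; apply/setP => f; rewrite /symdiff !inE.
  case g: (gb f) => //=; case: (gbP g) => fs _; rewrite fs.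
  by case: (z2 (f a)) => ->; case: (z2 (f b)) => ->.
- exact: ord.
Qed.
End S.

Lemma p1p2 (A : zmodType) (le : A -> A -> Prop) :
  plain le -> separating le (fun s => is_functional s /\ order_preserving le s).
Proof.
case=> I [ph [inj hadd hord]].
pose s (i : I) (a : A) : 'Z_2 := if i \in ph a then 1 else 0.
have good : forall i, is_functional (s i) /\ order_preserving le (s i).
  move=> i; split.
    move=> a b; rewrite /s hadd /symdiff !inE.
    by case: (i \in ph a); case: (i \in ph b) => //=; rewrite ?z2_11 ?addr0 ?add0r.
  move=> a b /hord /subsetP sub; rewrite /s /le_t.
  by case ia: (i \in ph a) => //; rewrite (sub _ ia).
split; first by move=> f [].
move=> a b nab.
have : ~~ (ph a \subset ph b) by apply/negP => /hord.
case/subsetPn => i ia ib; exists (s i) => //.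
by rewrite /s (negbTE ib) ia.
Qed.

Theorem theorem8p1 (A : finZmodType) (le : A -> A -> Prop)
  (hA : additive_poset le) :
  let P1 := plain le in
  let P2 := separating le
              (fun s => is_functional s /\ order_preserving le s) in
  let P3 := exists S : (A -> 'Z_2) -> Prop, subset_dual S /\ separating le S in
  let P4 := exists S : (A -> 'Z_2) -> Prop,
      [/\ subset_dual S,
          (forall a : A, (forall s, S s -> s a = 0) -> a = 0) &
          (forall a b : A, le a b <-> (forall s, S s -> le_t (s a) (s b)))] in
  [/\ P1 <-> P2, P2 <-> P3 & P3 <-> P4].
Proof.
move=> P1 P2 P3 P4.
have p23 : P2 -> P3.
  move=> H; exists (fun s => is_functional s /\ order_preserving le s).
  by split => // s [].
have p32 : P3 -> P2.
  case=> S [sd [op sep]]; split; first by move=> s [].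
  move=> a b nab; case: (sep a b nab) => s Ss hs; exists s => //.
  by split; [apply: sd | apply: op].
split.
- split; [exact: p1p2 | move=> H; exact: (@p2p1 A le hA H)].
- by split.
- split.
  + case=> S [sd [op sep]]; exists S; split => //.
    * move=> a H; case: hA => _ anti _ _ _; apply: anti.
        apply: NNPP => n; case: (sep a 0 n) => s Ss [sa _].
        by rewrite H in sa => //; apply: z2_10; rewrite sa.
      apply: NNPP => n; case: (sep 0 a n) => s Ss [s0 _].
      by rewrite fun0 in s0; [apply: z2_10; rewrite s0 | apply: sd].
    * move=> a b; split; first by move=> l s Ss; apply: op.
      move=> H; apply: NNPP => n; case: (sep a b n) => s Ss [sa sb].
      by have := H s Ss; rewrite sa sb.
  + case=> S [sd _ ord]; exists S; split => //; split.
      by move=> s Ss a b /ord; apply.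
    move=> a b nab; apply: NNPP => n; apply: nab; apply/ord => s Ss.
    apply: NNPP => nl; apply: n; exists s => //.
    move: nl; rewrite /le_t.
    by case: (z2 (s a)) => ->; case: (z2 (s b)) => ->.
Qed.
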